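(* Let $p$ be a prime, $a$ a positive integer and $N=p^a$. For $j\in\{0,1,\dots,N-1\}$ let $x_j=(x_{0,j},x_{1,j},\dots,x_{N-1,j})\in\mathbb{Z}_p^{N}$ where $x_{i,j}=\binom{i}{j}\bmod p$. Then for every $j$ and every cyclic shift $x'_j$ of $x_j$ (i.e. $x'_j=(x_{k,j},x_{k+1,j},\dots,x_{k-1,j})$ for some $k$, indices mod $N$), the difference $x_j-x'_j$ is a $\mathbb{Z}_p$-linear combination of $x_0,x_1,\dots,x_{j-1}$ (for $j=0$ this means $x_0-x'_0=0$). *)

(* Defs.v *)
From mathcomp Require Import all_boot all_algebra.
Set Implicit Arguments. Unset Strict Implicit. Unset Printing Implicit Defensive.
Import GRing.Theory.
Local Open Scope ring_scope.

Definition xvec (p N j : nat) : 'I_N -> 'F_p := fun i => ('C(i, j))%:R.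

Definition shift_idx (N k : nat) (i : 'I_N) : 'I_N :=
  match N as n return 'I_n -> 'I_n with
  | 0 => fun i => i
  | n.+1 => fun i => inord ((i + k) %% n.+1)
  end i.

Definition cshift (p N k : nat) (v : 'I_N -> 'F_p) : 'I_N -> 'F_p :=
  fun i => v (shift_idx k i).

(* Main.v *)
Require Import Defs.
From mathcomp Require Import all_boot all_algebra.
Import GRing.Theory.
Local Open Scope ring_scope.
Lemma binN0 p a l : prime p -> (0 < l < p ^ a)%N -> ('C(p ^ a, l))%:R = 0 :> 'F_p.
Proof.
move=> pp /andP[l0 lN].
have ch : p \in [pchar {poly 'F_p}] by rewrite pchar_poly pchar_Fp.
have E := exprDn_pchar ('X : {poly 'F_p}) 1 (n:=p ^ a).
rewrite (eq_pnat _ (pcharf_eq ch)) pnatX pnat_id // in E.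
have := congr1 (fun q : {poly 'F_p} => q`_l) (E isT).
rewrite exprD1n coef_sum expr1n coefD coefXn coefC.
rewrite (bigD1 (@Ordinal (p ^ a).+1 l (ltnW lN))) //= big1 ?addr0.
  rewrite coefMn coefXn eqxx.
  rewrite (ltn_eqF lN) (gtn_eqF l0) mulr1n /= => ->; by rewrite addr0.
move=> i /eqP ne; rewrite coefMn coefXn.
case: eqP => [hi|]; last by rewrite mul0rn.
by exfalso; apply: ne; apply: val_inj => /=.
Qed.

Lemma binper p a n j : prime p -> (j < p ^ a)%N ->
  ('C(p ^ a + n, j))%:R = ('C(n, j))%:R :> 'F_p.
Proof.
move=> pp jN; rewrite -binomial.Vandermonde natr_sum big_ord_recl /= bin0 subn0 mul1n.
rewrite big1 ?addr0 // => i _; rewrite natrM binN0 ?mul0r //.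
by rewrite /= /bump leq0n add1n (leq_ltn_trans (ltn_ord i) jN).
Qed.

Lemma binmod p a n j : prime p -> (j < p ^ a)%N ->
  ('C(n %% p ^ a, j))%:R = ('C(n, j))%:R :> 'F_p.
Proof.
move=> pp jN; rewrite {2}(divn_eq n (p ^ a)).
elim: (n %/ p ^ a)%N => [|q IH]; first by rewrite mul0n add0n.
by rewrite mulSn -addnA binper.
Qed.

Lemma shift_val N k (i : 'I_N) : nat_of_ord (shift_idx k i) = ((i + k) %% N)%N.
Proof.
case: N i => [[]//|n] i /=; by rewrite inordK // ltn_pmod.
Qed.

Theorem claim4p2 (p a : nat) (hp : prime p) (ha : (0 < a)%N)
  (j : nat) (hj : (j < p ^ a)%N) (k : nat) :
  exists c : 'I_j -> 'F_p,
    forall i : 'I_(p ^ a),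
      xvec p j i - cshift k (xvec p j) i = \sum_(l < j) c l * xvec p l i.
Proof.
exists (fun l => - ('C(k, j - l))%:R) => i.
rewrite /cshift /xvec shift_val binmod // -binomial.Vandermonde natr_sum big_ord_recr /=.
rewrite subnn bin0 muln1 opprD addrCA subrr addr0 -sumrN.
apply: eq_bigr => l _; by rewrite natrM mulrC mulNr.
Qed.
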